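(* Let $\kappa$ be a cardinal with $\mathrm{cf}(\kappa) > \omega$, let $\mathcal{A}$ and $\mathcal{B}$ be almost disjoint families on $\omega$ of size $\kappa$, and let $h : \mathcal{A} \to \mathcal{B}$ be a bijection. Then for every $n \in \omega$ there are $x, y, z \in \mathcal{A}$ such that (1) $\max(x \cap y) > n$ and $x \cap y \subsetneq x \cap z$; and (2) $\max(h(x) \cap h(y)) > n$ and $h(x) \cap h(y) \subsetneq h(x) \cap h(z)$.
   Context: An almost disjoint (AD) family on $\omega$ is a family of infinite subsets of $\omega$ any two distinct members of which have finite intersection. *)

(* Defs.v *)
From HB Require Import structures.
From mathcomp Require Import all_boot all_order all_algebra.
From mathcomp Require Import boolp classical_sets functions cardinality.
Set Implicit Arguments. Unset Strict Implicit. Unset Printing Implicit Defensive.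
Local Open Scope classical_set_scope.
Local Open Scope card_scope.

Definition almost_disjoint (F : set (set nat)) : Prop :=
  (forall x, F x -> infinite_set x) /\
  (forall x y, F x -> F y -> x <> y -> finite_set (x `&` y)).

(* For an infinite
   cardinal kappa this is exactly cf(kappa) > omega (under AC). *)
Definition uncountable_cofinality (T : Type) (X : set T) : Prop :=
  ~ countable X /\
  (forall S : nat -> set T, (forall n, S n `<=` X) ->
     X = \bigcup_(n in [set: nat]) S n -> exists n, X #<= S n).

Definition max_gt (s : set nat) (n : nat) : Prop :=
  exists m, s m /\ (forall k, s k -> (k <= m)%N) /\ (n < m)%N.

(* Main.v *)
Require Import Defs.
From mathcomp Require Import all_boot all_order all_algebra.
From mathcomp Require Import boolp classical_sets functions cardinality.
Local Open Scope classical_set_scope.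
Local Open Scope card_scope.

Lemma seq_bound (l : seq nat) : exists b, forall k, k \in l -> (k <= b)%N.
Proof.
elim: l => [|a l [b Hb]]; first by exists 0%N.
exists (maxn a b) => k; rewrite inE => /orP[/eqP->|/Hb kb].
  by rewrite leq_maxl.
by rewrite (leq_trans kb) // leq_maxr.
Qed.

Lemma fin_max (s : set nat) m0 : finite_set s -> s m0 ->
  exists m, s m /\ (forall k, s k -> (k <= m)%N).
Proof.
move=> /finite_seqP[l ->] /= Hm0.
have [b Hb] := seq_bound l.
have exP : exists i, (fun k => k \in l) i by exists m0.
case: (ex_maxnP exP Hb) => i Hi Hmax.
by exists i; split.
Qed.

Lemma inf_gt (y : set nat) n : infinite_set y -> exists m, y m /\ (n < m)%N.
Proof.
move=> Hy; apply: contrapT => Hn; apply: Hy.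
apply: (@sub_finite_set _ _ `I_n.+1); last exact: finite_II.
move=> k yk /=; rewrite ltnS leqNgt; apply/negP => nk; apply: Hn.
by exists k.
Qed.

Lemma two_elems (A S : set (set nat)) : ~ countable A -> A #<= S ->
  exists y z, [/\ S y, S z & y <> z].
Proof.
move=> HA HAS; apply: contrapT => Hn; apply: HA.
apply: finite_set_countable; apply: (card_le_finite HAS).
case: (pselect (exists y, S y)) => [[y0 Sy0]|Hne].
  apply: (@sub_finite_set _ _ [set y0]); last exact: finite_set1.
  move=> z Sz /=; apply: contrapT => zy; apply: Hn.
  by exists z, y0; split.
apply: (@sub_finite_set _ _ set0); last exact: finite_set0.
by move=> z Sz; apply: Hne; exists z.
Qed.

Lemma big (A P : set (set nat)) (K : countType) (R : set nat -> K -> Prop) :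
  uncountable_cofinality A -> A #<= P -> (forall y, P y -> exists k, R y k) ->
  exists k, A #<= [set y | P y /\ R y k].
Proof.
move=> [HAc Hcof] /pcard_leP /injfunPex [f ffun finj] HR.
have [a0 Aa0] : exists a, A a.
  apply: contrapT => Hne; apply: HAc.
  have -> : A = set0 by apply/seteqP; split => // a Aa; apply: Hne; exists a.
  exact/finite_set_countable/finite_set0.
have [k0 _] := HR _ (ffun _ Aa0).
have Htot : forall y, exists k, P y -> R y k.
  by move=> y; case: (pselect (P y)) => [/HR[k Hk]|nP]; [exists k | exists k0].
have [c Hc] := choice Htot.
pose S := fun j : nat => [set a | A a /\ pickle (c (f a)) = j].
have [j Hj] : exists j, A #<= S j.
  apply: Hcof; first by move=> j a [].
  apply/seteqP; split => [a Aa|a [j _ []]//].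
  by exists (pickle (c (f a))).
move: Hj => /pcard_leP /injfunPex [g gfun ginj].
exists (c (f (g a0))).
apply/pcard_leP/injfunPex; exists (f \o g).
  move=> a Aa /=; have [Aga Hga] := gfun _ Aa; have [_ Hga0] := gfun _ Aa0.
  have E : c (f (g a)) = c (f (g a0)).
    by apply: (pcan_inj (@pickleK K)); rewrite Hga Hga0.
  split; first exact: ffun.
  by rewrite -E; apply: Hc; apply: ffun.
move=> a b Aa Ab /= E.
have [Aga _] := gfun _ (set_mem Aa); have [Agb _] := gfun _ (set_mem Ab).
apply: ginj => //.
by apply: finj => //; apply/mem_set.
Qed.
Theorem lemma6 (A B : set (set nat)) (h : set nat -> set nat) :
  almost_disjoint A -> almost_disjoint B ->
  uncountable_cofinality A ->
  set_bij A B h ->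
  forall n : nat, exists x y z : set nat,
    [/\ A x, A y, A z,
        max_gt (x `&` y) n /\ x `&` y `<` x `&` z &
        max_gt (h x `&` h y) n /\ h x `&` h y `<` h x `&` h z].
Proof.
move=> [Ainf Adisj] [Binf Bdisj] HA [hfun hinj _] n.
have hneq : forall x y, A x -> A y -> x <> y -> h x <> h y.
  by move=> x y Ax Ay xy E; apply: xy; apply: hinj => //; apply/mem_set.
pose R1 := fun (y : set nat) (k : nat * nat) =>
  [/\ y k.1, (n < k.1)%N, h y k.2 & (n < k.2)%N].
have HR1 : forall y, A y -> exists k, R1 y k.
  move=> y Ay; have [m [ym nm]] := inf_gt _ n (Ainf y Ay).
  have [m' [ym' nm']] := inf_gt _ n (Binf _ (hfun _ Ay)).
  by exists (m, m'); split.
have [k1 Hk1] := @big A A _ R1 HA (card_lexx A) HR1.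
have [x [_ [[Ax R1x] _ _]]] := two_elems _ _ HA.1 Hk1.
pose P1 := [set y | A y /\ R1 y k1].
pose R2 := fun (y : set nat) (k : option (seq nat * seq nat)) =>
  match k with
  | None => y = x
  | Some s => [/\ y <> x, x `&` y = [set` s.1] & h x `&` h y = [set` s.2]]
  end.
have HR2 : forall y, P1 y -> exists k, R2 y k.
  move=> y [Ay _]; case: (pselect (y = x)) => [->|yx]; first by exists None.
  have /finite_seqP[s1 E1] := Adisj x y Ax Ay (nesym yx).
  have /finite_seqP[s2 E2] := Bdisj _ _ (hfun _ Ax) (hfun _ Ay) (hneq _ _ Ax Ay (nesym yx)).
  by exists (Some (s1, s2)).
have [k2 Hk2] := @big A P1 _ R2 HA Hk1 HR2.
case: k2 Hk2 => [[s1 s2]|] Hk2; last first.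
  have [y [z [[_ /= ->] [_ /= ->] //]]] := two_elems _ _ HA.1 Hk2.
pose P2 := [set y | P1 y /\ R2 y (Some (s1, s2))].
pose R3 := fun (y : set nat) (k : nat * nat) =>
  [/\ y k.1, ~ x k.1, h y k.2 & ~ h x k.2].
have HR3 : forall y, P2 y -> exists k, R3 y k.
  move=> y [[Ay _] [yx _ _]].
  have infD : forall (u v : set nat), infinite_set u -> finite_set (v `&` u) ->
      exists m, u m /\ ~ v m.
    move=> u v Hu Hvu; apply: contrapT => Hn; apply: Hu.
    apply: (sub_finite_set _ Hvu) => m um; split => //.
    by apply: contrapT => vm; apply: Hn; exists m.
  have [m [ym xm]] := infD y x (Ainf _ Ay) (Adisj _ _ Ax Ay (nesym yx)).
  have [m' [ym' xm']] := infD (h y) (h x) (Binf _ (hfun _ Ay))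
    (Bdisj _ _ (hfun _ Ax) (hfun _ Ay) (hneq _ _ Ax Ay (nesym yx))).
  by exists (m, m'); split.
have [k3 Hk3] := @big A P2 _ R3 HA Hk2 HR3.
have [y [z [[[[Ay R1y] [yx Ey1 Ey2]] R3y] [[[Az R1z] [zx Ez1 Ez2]] R3z] yz]]] :=
  two_elems _ _ HA.1 Hk3.
exists y, x, z; split => //.
- split.
    have [m [[ym xm] mmax]] : exists m, (y `&` x) m /\ (forall k, (y `&` x) k -> (k <= m)%N).
      apply: (@fin_max _ k1.1); first exact: Adisj.
      by case: R1y; case: R1x.
    exists m; split => //; split => //.
    case: R1y => yk nk _ _; case: R1x => xk _ _ _.
    by apply: (leq_trans nk); apply: mmax.
  split.
    move=> k [yk xk]; split => //.
    have : (x `&` y) k by [].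
    by rewrite Ey1 -Ez1 => -[].
  move=> Hsub; case: R3y => y1 nx1 _ _; case: R3z => z1 _ _ _.
  by have [] := Hsub k3.1.
- split.
    have [m [[ym xm] mmax]] : exists m, (h y `&` h x) m /\ (forall k, (h y `&` h x) k -> (k <= m)%N).
      apply: (@fin_max _ k1.2).
        by apply: Bdisj; [exact: hfun|exact: hfun|exact: hneq].
      by case: R1y; case: R1x.
    exists m; split => //; split => //.
    case: R1y => _ _ yk nk; case: R1x => _ _ xk _.
    by apply: (leq_trans nk); apply: mmax.
  split.
    move=> k [yk xk]; split => //.
    have : (h x `&` h y) k by [].
    by rewrite Ey2 -Ez2 => -[].
  move=> Hsub; case: R3y => _ _ y1 nx1; case: R3z => _ _ z1 _.
  by have [] := Hsub k3.2.
Qed.
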